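(* Let $G$ be a group with finite generating set $S$, and let $F\subset G$ be a finite nonempty set which is optimal for the outer boundary. Then there is a set $F^*$ with $|F^*|=|F|$ which is optimal for the outer boundary and such that $F^*\cup\partial_{out}F^*$ is optimal for the inner boundary. Furthermore, every set of cardinality $|F^*\cup\partial_{out}F^*|$ which is optimal for the inner boundary is of the form $F''\cup\partial_{out}F''$ for some set $F''$ with $|F''|=|F|$ which is optimal for the outer boundary.
   Context: For finite $F\subset G$: $\partial_{in}F=\{g\in F:\exists s\in S\cup S^{-1}, gs\notin F\}$ and $\partial_{out}F=\{gs:g\in F,s\in S\cup S^{-1}\}\setminus F$. A finite nonempty set $F$ is optimal for the inner (resp. outer) boundary if for every finite nonempty $F'$ with $|F'|\leq|F|$ one has $\frac{|\partial F'|}{|F'|}\geq\frac{|\partial F|}{|F|}$, with strict inequality whenever $|F'|<|F|$, where $\partial=\partial_{in}$ (resp. $\partial_{out}$). *)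

(* Defs.v *)
From HB Require Import structures.
From mathcomp Require Import all_boot all_order all_algebra.
From mathcomp Require Import finmap.

Set Implicit Arguments.
Unset Strict Implicit.
Unset Printing Implicit Defensive.

Local Open Scope fset_scope.

Section Boundaries.
Variable G : groupType.

Definition symgens (S : {fset G}) : {fset G} :=
  S `|` [fset (s^-1)%g | s in S].

Definition generates (S : {fset G}) : Prop :=
  forall g : G, exists w : seq G,
    all (fun s => s \in symgens S) w /\ g = foldr (fun a b => (a * b)%g) 1%g w.

Definition inner_bd (S F : {fset G}) : {fset G} :=
  [fset g in F | has (fun s => (g * s)%g \notin F) (enum_fset (symgens S))].

Definition outer_bd (S F : {fset G}) : {fset G} :=
  [fset (g * s)%g | g in F, s in symgens S] `\` F.

Definition bd_ratio (bd : {fset G} -> {fset G}) (F : {fset G}) : rat :=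
  ((#|` bd F|)%:R / (#|` F|)%:R)%R.

Definition optimal (bd : {fset G} -> {fset G}) (F : {fset G}) : Prop :=
  F != fset0 /\
  forall F' : {fset G}, F' != fset0 -> (#|` F'| <= #|` F|)%N ->
    (bd_ratio bd F <= bd_ratio bd F')%R /\
    ((#|` F'| < #|` F|)%N -> (bd_ratio bd F < bd_ratio bd F')%R).

Definition optimal_in (S F : {fset G}) : Prop := optimal (inner_bd S) F.
Definition optimal_out (S F : {fset G}) : Prop := optimal (outer_bd S) F.

End Boundaries.

(* Main.v *)
Require Import Defs.
From HB Require Import structures.
From mathcomp Require Import all_boot all_order all_algebra.
From mathcomp Require Import finmap zify.
From Stdlib Require Import Classical.
Import GRing.Theory Num.Theory.

Local Open Scope fset_scope.
Section S.
Variable G : groupType.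
Variable S : {fset G}.
Local Notation ob := (outer_bd S).
Local Notation ib := (inner_bd S).

Lemma mem_ob A y : reflect (y \notin A /\ exists g s, g \in A /\ s \in symgens S /\ y = (g * s)%g) (y \in ob A).
Proof.
have X := (@imfset2P imfset_key G G (fun _ => G) (fun g s => (g*s)%g) (mem_fin (fin_finpred A)) (fun _ => mem_fin (fin_finpred (symgens S))) y).
rewrite /outer_bd in_fsetD; apply: (iffP andP) => [[H1 H2]|[H1 [g [s [Hg [Hs Hy]]]]]].
  split=> //. case/X: H2 => g Hg [s Hs ->]. by exists g, s.
split=> //. apply/X. by exists g => //; exists s.
Qed.

Lemma mem_ib A g : reflect (g \in A /\ exists s, s \in symgens S /\ (g * s)%g \notin A) (g \in ib A).
Proof.
rewrite /inner_bd !inE; apply: (iffP andP) => [[H1 /hasP [s Hs H2]]|[H1 [s [Hs H2]]]].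
  by split=> //; exists s.
by split=> //; apply/hasP; exists s.
Qed.

Lemma ob_remove A x : ob (A `\ x) `<=` ob A `|` [fset x].
Proof.
apply/fsubsetP => y /mem_ob [Hy [g [s [Hg [Hs E]]]]].
rewrite in_fsetU in_fset1; case: (eqVneq y x) => [->|Hyx]; rewrite ?orbT //.
apply/orP; left; apply/mem_ob; split.
  by apply: contra Hy => Hy; rewrite in_fsetD1 Hyx.
exists g, s; split => //; by move: Hg; rewrite in_fsetD1 => /andP[].
Qed.

Lemma card_ob_remove A x : (#|` ob (A `\ x)| <= #|` ob A| + 1)%N.
Proof.
apply: leq_trans (fsubset_leq_card (ob_remove A x)) _.
by rewrite -(cardfs1 x); case: (leq_card_fsetU (ob A) [fset x]).
Qed.

Lemma shrink d : forall (A : {fset G}) j, #|` A| = (j + d)%N -> exists B, B `<=` A /\ #|` B| = j /\ (#|` ob B| <= #|` ob A| + d)%N.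
Proof.
elim: d => [|d IH] A j HA.
  by exists A; rewrite addn0 in HA; split; [exact: fsubset_refl|split => //; rewrite addn0].
have : A != fset0 by rewrite -cardfs_gt0 HA addnS.
case/fset0Pn => x Hx.
have HA' : #|` A `\ x| = (j + d)%N.
  by move: (cardfsD1 x A); rewrite Hx HA addnS add1n => -[].
case: (IH _ _ HA') => B [HB1 [HB2 HB3]].
exists B; split; first by apply: fsubset_trans HB1 (fsubsetDl _ _).
split => //. have := card_ob_remove A x. lia.
Qed.

Lemma ob_mono B A : B `<=` A -> B `|` ob B `<=` A `|` ob A.
Proof.
move=> /fsubsetP HBA; apply/fsubsetP => y; rewrite !in_fsetU => /orP [/HBA ->//|].
case/mem_ob => Hy [g [s [Hg [Hs E]]]].
case: (boolP (y \in A)) => //= HyA; apply/mem_ob; split => //.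
by exists g, s; split => //; apply: HBA.
Qed.

Lemma int_ob E : ob (E `\` ib E) `<=` ib E.
Proof.
apply/fsubsetP => y /mem_ob [Hy [g [s [Hg [Hs Ey]]]]].
move: Hg; rewrite in_fsetD => /andP [Hg1 Hg2].
have HyE : y \in E.
  apply: contraT => HyE; case/negP: Hg1; apply/mem_ib; split => //.
  by exists s; rewrite -Ey.
by move: Hy; rewrite in_fsetD HyE andbT negbK.
Qed.

Lemma int_sub E : (E `\` ib E) `|` ob (E `\` ib E) `<=` E.
Proof.
apply/fsubsetP => y; rewrite in_fsetU => /orP [|/(fsubsetP (int_ob E))].
  by rewrite in_fsetD => /andP [].
by case/mem_ib.
Qed.

Lemma ib_cl A : ib (A `|` ob A) `<=` ob A.
Proof.
apply/fsubsetP => g /mem_ib [Hg [s [Hs Hgs]]].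
move: Hg; rewrite in_fsetU => /orP [HgA|//].
case/negP: Hgs; rewrite in_fsetU; case: (boolP ((g * s)%g \in A)) => //= H.
by apply/mem_ob; split => //; exists g, s.
Qed.

Lemma card_cl A : #|` A `|` ob A| = (#|` A| + #|` ob A|)%N.
Proof.
have HI : A `&` ob A = fset0.
  apply/eqP; rewrite -fsubset0; apply/fsubsetP => y; rewrite in_fsetI => /andP [H1 /mem_ob [H2 _]].
  by rewrite H1 in H2.
by have := cardfsUI A (ob A); rewrite HI cardfs0 addn0.
Qed.

Lemma card_int E : #|` E| = (#|` E `\` ib E| + #|` ib E|)%N.
Proof.
rewrite cardfsDS ?subnK //; first by apply: fsubset_leq_card; apply/fsubsetP => g /mem_ib [].
by apply/fsubsetP => g /mem_ib [].
Qed.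

Lemma rat_le a b c d : (0 < b)%N -> (0 < d)%N ->
  ((a%:R / b%:R <= c%:R / d%:R :> rat) = (a * d <= c * b)%N)%R.
Proof.
move=> hb hd.
by rewrite ler_pdivrMr ?ltr0n // mulrAC ler_pdivlMr ?ltr0n // -!natrM ler_nat.
Qed.

Lemma rat_lt a b c d : (0 < b)%N -> (0 < d)%N ->
  ((a%:R / b%:R < c%:R / d%:R :> rat) = (a * d < c * b)%N)%R.
Proof.
move=> hb hd.
by rewrite ltr_pdivrMr ?ltr0n // mulrAC ltr_pdivlMr ?ltr0n // -!natrM ltr_nat.
Qed.

Lemma opt_nat (bd : {fset G} -> {fset G}) F : optimal bd F <->
  F != fset0 /\ forall F', F' != fset0 -> (#|` F'| <= #|` F|)%N ->
    (#|` bd F| * #|` F'| <= #|` bd F'| * #|` F|)%N /\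
    ((#|` F'| < #|` F|)%N -> (#|` bd F| * #|` F'| < #|` bd F'| * #|` F|)%N).
Proof.
rewrite /optimal /bd_ratio; split => -[HF H]; split => // F' HF' Hle;
  have hF : (0 < #|` F|)%N by rewrite cardfs_gt0.
all: have hF' : (0 < #|` F'|)%N by rewrite cardfs_gt0.
- by have := H F' HF' Hle; rewrite rat_le ?rat_lt.
- by rewrite rat_le ?rat_lt //; apply: H.
Qed.

Lemma card_eq_sub (A B : {fset G}) : A `<=` B -> (#|` B| <= #|` A|)%N -> A = B.
Proof.
move=> HAB Hc; apply/fsetP/fsubset_cardP => //.
by apply/eqP; rewrite eqn_leq Hc fsubset_leq_card.
Qed.

Lemma keyK F E : optimal_out S F -> E != fset0 -> (#|` E| <= #|` F| + #|` ob F|)%N ->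
  (#|` ob F| * #|` E| < #|` ib E| * (#|` F| + #|` ob F|))%N \/
  exists A : {fset G}, #|` A| = #|` F| /\ #|` ob A| = #|` ob F| /\ E = A `|` ob A.
Proof.
move=> /opt_nat [HF Hopt] HE HN.
have hn : (0 < #|` F|)%N by rewrite cardfs_gt0.
have hN : (0 < #|` E|)%N by rewrite cardfs_gt0.
have HNk := card_int E.
have ho := fsubset_leq_card (int_ob E).
have hsub := int_sub E.
set F' := E `\` ib E in HNk ho hsub.
case: (posnP #|` F'|) => hk0.
  left; nia.
case: (leqP #|` F'| #|` F|) => hkn.
  have hF'ne : F' != fset0 by rewrite -cardfs_gt0.
  have [h1 h2] := Hopt F' hF'ne hkn.
  case: (ltnP #|` F'| #|` F|) => hkn2.
    left; have := h2 hkn2; nia.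
  have hkeq : #|` F'| = #|` F| by apply/eqP; rewrite eqn_leq hkn hkn2.
  rewrite hkeq leq_pmul2r // in h1.
  case: (ltnP #|` ob F| #|` ib E|) => hbi.
    left; nia.
  right; exists F'; split => //; split; first lia.
  apply/esym/card_eq_sub => //; rewrite card_cl; lia.
have [B [HB1 [HB2 HB3]]] := shrink (#|` F'| - #|` F|) F' #|` F| ltac:(lia).
have hBne : B != fset0 by rewrite -cardfs_gt0 HB2.
have [h1 _] := Hopt B hBne ltac:(lia).
rewrite HB2 leq_pmul2r // in h1.
right; exists B; split => //; split; first lia.
apply/esym/card_eq_sub.
  by apply: fsubset_trans hsub; apply: ob_mono.
rewrite card_cl; lia.
Qed.

Lemma transfer F A : optimal_out S F -> #|` A| = #|` F| -> #|` ob A| = #|` ob F| -> optimal_out S A.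
Proof.
move=> /opt_nat [HF Hopt] h1 h2; apply/opt_nat; split.
  by rewrite -cardfs_gt0 h1 cardfs_gt0.
by move=> F' HF'; rewrite h1 h2; apply: Hopt.
Qed.
End S.

Lemma min_ex (P : nat -> Prop) j : P j -> exists j0, P j0 /\ forall j', P j' -> (j0 <= j')%N.
Proof.
elim: j {-2}j (leqnn j) => [|m IH] j hj Pj.
  exists j; split => // j' _; move: hj; rewrite leqn0 => /eqP ->; done.
case: (classic (exists j', (j' < j)%N /\ P j')) => [[j' [h1 h2]]|hn].
  by apply: (IH j') => //; lia.
exists j; split => // j' Pj'; rewrite leqNgt; apply/negP => h; apply: hn; by exists j'.
Qed.

Theorem mainTheorem4 (G : groupType) (S : {fset G}) (F : {fset G}) :
  generates S ->
  optimal_out S F ->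
  exists Fs : {fset G},
    #|` Fs| = #|` F| /\
    optimal_out S Fs /\
    optimal_in S (Fs `|` outer_bd S Fs) /\
    (forall E : {fset G},
        #|` E| = #|` (Fs `|` outer_bd S Fs)| ->
        optimal_in S E ->
        exists F2 : {fset G},
          #|` F2| = #|` F| /\ optimal_out S F2 /\ E = F2 `|` outer_bd S F2).
Proof.
move=> _ HF.
have hn : (0 < #|` F|)%N by case/opt_nat: HF => H _; rewrite cardfs_gt0.
pose P j := exists A : {fset G}, #|` A| = #|` F| /\ #|` outer_bd S A| = #|` outer_bd S F| /\
   #|` inner_bd S (A `|` outer_bd S A)| = j.
have [j0 [[Fs [hFs1 [hFs2 hFs3]]] hmin]] : exists j0, P j0 /\ forall j', P j' -> (j0 <= j')%N.
  by apply: (@min_ex P #|` inner_bd S (F `|` outer_bd S F)|); exists F.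
have hj0 : (j0 <= #|` outer_bd S F|)%N.
  by rewrite -hFs3 -hFs2; apply: fsubset_leq_card; apply: ib_cl.
have hcl : #|` Fs `|` outer_bd S Fs| = (#|` F| + #|` outer_bd S F|)%N by rewrite card_cl hFs1 hFs2.
have hclne : Fs `|` outer_bd S Fs != fset0 by rewrite -cardfs_gt0 hcl; lia.
exists Fs; split => //; split; first exact: transfer _ _ _ _ HF hFs1 hFs2.
split.
  apply/opt_nat; split => // E HE HEle; rewrite hFs3 hcl.
  rewrite hcl in HEle.
  case: (keyK _ _ _ _ HF HE HEle) => [h|[A [hA1 [hA2 ->]]]].
    split; [|move=> _]; nia.
  have := hmin #|` inner_bd S (A `|` outer_bd S A)| ltac:(by exists A).
  rewrite card_cl hA1 hA2; split; [|lia]; nia.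
move=> E hE hEopt; rewrite hcl in hE.
have HE : E != fset0 by rewrite -cardfs_gt0 hE; lia.
case: (keyK _ _ _ _ HF HE ltac:(lia)) => [h|[A [hA1 [hA2 ->]]]].
  exfalso; case/opt_nat: hEopt => _ /(_ _ hclne ltac:(lia)) [h1 _].
  rewrite hcl hE hFs3 in h1; nia.
by exists A; split => //; split => //; apply: transfer _ _ _ _ HF hA1 hA2.
Qed.
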